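(* There is a meager set $M\subseteq(\omega^\omega)^2$ such that for every superperfect tree $T\subseteq\omega^{<\omega}$ there are $f\neq g$ in $[T]$ with $\langle f,g\rangle\in M$.
   Context: A tree $T\subseteq\omega^{<\omega}$ is superperfect if for every $\sigma\in T$ there is $\tau\supseteq\sigma$ in $T$ such that $\tau^\frown\langle n\rangle\in T$ for infinitely many $n$; $[T]$ is the set of infinite branches of $T$. *)

(* Defs.v *)
From mathcomp Require Import all_boot all_order all_algebra.
From mathcomp Require Import all_classical all_reals all_analysis.
Set Implicit Arguments. Unset Strict Implicit. Unset Printing Implicit Defensive.
Local Open Scope classical_set_scope.

(* Baire space omega^omega : product topology of the discrete space nat. *)
Definition baire := {ptws nat -> nat}.

Definition nowhere_dense (X : topologicalType) (A : set X) : Prop :=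
  interior (closure A) = set0.

Definition meager (X : topologicalType) (A : set X) : Prop :=
  exists N : nat -> set X,
    (forall n, nowhere_dense (N n)) /\ A `<=` \bigcup_n N n.

Definition is_tree (T : set (seq nat)) : Prop :=
  T [::] /\ forall s t : seq nat, prefix s t -> T t -> T s.

Definition body (T : set (seq nat)) : set baire :=
  [set f | forall n : nat, T (mkseq f n)].

Definition superperfect (T : set (seq nat)) : Prop :=
  is_tree T /\
  forall sigma, T sigma ->
    exists tau, T tau /\ prefix sigma tau /\
      infinite_set [set n : nat | T (rcons tau n)].

(* Main.v *)
Require Import Defs.
From mathcomp Require Import all_boot all_order all_algebra.
From mathcomp Require Import all_classical all_reals all_analysis.
From mathcomp Require Import zify.
Local Open Scope classical_set_scope.

Lemma near_coord (x : baire * baire) (m : nat) :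
  \forall y \near x, y.1 m = x.1 m /\ y.2 m = x.2 m.
Proof.
have h1 : (fun y : baire * baire => y.1) @ x --> x.1 by exact: cvg_fst.
have h1' : (fun y : baire * baire => y.2) @ x --> x.2 by exact: cvg_snd.
have h2 : forall f0 : baire, (fun f : baire => f m) @ f0 --> f0 m.
  move=> f0; exact: (@proj_continuous nat (fun _ => nat) m f0).
apply: filterI.
  apply: (h1 (fun f : baire => f m = x.1 m)).
  apply: (h2 x.1 (fun v => v = x.1 m)). by move=> ? ->.
apply: (h1' (fun f : baire => f m = x.2 m)).
apply: (h2 x.2 (fun v => v = x.2 m)). by move=> ? ->.
Qed.

Lemma near_coords (x : baire * baire) (n : nat) :
  \forall y \near x, forall m, (m <= n)%N -> y.1 m = x.1 m /\ y.2 m = x.2 m.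
Proof.
elim: n => [|n IH].
  apply: filterS (near_coord x 0) => y H m; rewrite leqn0 => /eqP ->; exact H.
apply: filterS2 IH (near_coord x n.+1) => y H1 H2 m.
rewrite leq_eqVlt => /orP [/eqP ->|]; first exact H2.
rewrite ltnS; exact: H1.
Qed.

Definition trunc (j : nat) (f : baire) : baire := fun i => if (i < j)%N then f i else 0%N.

Lemma trunc_cvg (f : baire) : (fun j => trunc j f) @ \oo --> f.
Proof.
apply/cvg_sup => N U [V] [[W] oW <-] WfN WU.
apply: (filterS WU); rewrite nbhs_simpl; exists N.+1 => // i /= Hi.
by rewrite /trunc Hi.
Qed.

Lemma bound_exists (h : nat -> nat) j : exists B, forall m, (m < j)%N -> (h m < B)%N.
Proof.
elim: j => [|j [B HB]]; first by exists 0%N.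
exists (maxn B (h j).+1) => m; rewrite ltnS leq_eqVlt => /orP [/eqP ->|Hm].
  by rewrite leq_max leqnn orbT.
by rewrite leq_max HB.
Qed.

Definition Pk (k : nat) (x : baire * baire) : Prop :=
  forall n, (k <= n)%N -> exists m, (m <= n)%N /\ ((n <= x.1 m)%N \/ (n <= x.2 m)%N).

Lemma Pk_closure k : closure (Pk k) `<=` Pk k.
Proof.
move=> x Hx; apply: contrapT => nP.
have [n [kn Hn]] : exists n, (k <= n)%N /\ forall m, (m <= n)%N -> (x.1 m < n)%N /\ (x.2 m < n)%N.
  apply: contrapT => H; apply: nP => n kn; apply: contrapT => H2; apply: H.
  exists n; split => // m mn; split; rewrite ltnNge; apply/negP => H3; apply: H2;
    exists m; tauto.
have [y [Py Hy]] := Hx _ (near_coords x n).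
have [m [mn Hm]] := Py n kn.
have [e1 e2] := Hy m mn; have [h1 h2] := Hn m mn.
by case: Hm; rewrite ?e1 ?e2 leqNgt ?h1 ?h2.
Qed.

Lemma Pk_nd k : nowhere_dense (Pk k).
Proof.
rewrite /nowhere_dense; apply/seteqP; split => x //= Hx; exfalso.
have Hx' : nbhs x (Pk k).
  by apply: filterS Hx; exact: Pk_closure.
have cv : (fun j => (trunc j x.1, trunc j x.2)) @ \oo --> x.
  by case: x Hx Hx' => a b _ _; exact: (cvg_pair (trunc_cvg a) (trunc_cvg b)).
have [j _ Hj] := cv _ Hx'.
have [B HB] := bound_exists (fun m => x.1 m + x.2 m)%N j.
have := Hj j (leqnn j); rewrite /= => /(_ (k + B + 1)%N (leq_trans (leq_addr _ _) (leq_addr _ _))).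
move=> [m [mn Hm]]; move: Hm; rewrite /trunc /=.
case E: (m < j)%N; last by move=> [] H; lia.
have := HB m E => hb; case => H; move: hb H; move: (x.1 m) (x.2 m) => a b /=; lia.
Qed.

Lemma nth_prefix {s t : seq nat} {i} : (i < size s)%N -> prefix s t -> nth 0%N s i = nth 0%N t i.
Proof. by move=> Hi /prefixP [u ->]; rewrite nth_cat Hi. Qed.

Lemma chain_limit (Y : nat -> seq nat) :
  (forall j, prefix (Y j) (Y j.+1)) -> (forall j, (j < size (Y j))%N) ->
  (forall j i, (i < size (Y j))%N -> nth 0%N (Y j) i = nth 0%N (Y i) i) /\
  (forall n, prefix (mkseq (fun i => nth 0%N (Y i) i) n) (Y n)).
Proof.
move=> HP HS.
have HPP : forall j d, prefix (Y j) (Y (j + d)).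
  move=> j; elim=> [|d IH]; first by rewrite addn0 prefix_refl.
  by apply: prefix_trans IH _; rewrite addnS.
have H1 : forall j i, (i < size (Y j))%N -> nth 0%N (Y j) i = nth 0%N (Y i) i.
  move=> j i Hi; case: (leqP j i) => ji.
    by have := HPP j (i - j); rewrite subnKC // => Hp; exact: nth_prefix Hi Hp.
  have := HPP i (j - i); rewrite subnKC ?(ltnW ji) // => Hp.
  by rewrite (nth_prefix (HS i) Hp).
split => // n; rewrite prefixE size_mkseq; apply/eqP.
apply: (@eq_from_nth _ 0%N); first by rewrite size_take size_mkseq (HS n).
move=> i; rewrite size_take (HS n) => Hi.
by rewrite nth_take // nth_mkseq // H1 // (ltn_trans Hi (HS n)).
Qed.

Lemma construct (T : seq nat -> Prop) (rho : seq nat -> seq nat) (pk : seq nat -> nat -> nat)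
  (tau0 : seq nat) (a b : nat) :
  (forall s t, prefix s t -> T t -> T s) ->
  (forall s, T s -> T (rho s) /\ prefix s (rho s)) ->
  (forall s L, T s -> T (rcons (rho s) (pk s L)) /\ (L <= pk s L)%N) ->
  T (rcons tau0 a) -> T (rcons tau0 b) -> a <> b -> (size (rho (rcons tau0 a)) <= b)%N ->
  exists f g : nat -> nat, (forall n, T (mkseq f n)) /\ (forall n, T (mkseq g n)) /\
    f <> g /\
    (forall n, (size tau0 <= n)%N -> exists m, (m <= n)%N /\ ((n <= f m)%N \/ (n <= g m)%N)).
Proof.
move=> Tpre Trho Tpk Ta Tb ab Hb.
pose h A B := rcons (rho A) (pk A (size (rho B))).
pose XX := fix XX j := if j is j'.+1 then let p := XX j' in (p.2, h p.1 p.2)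
                      else (rcons tau0 a, rcons tau0 b).
pose X j := (XX j).1.
have X2 : forall j, X j.+2 = h (X j) (X j.+1) by [].
have X0 : X 0 = rcons tau0 a by [].
have X1 : X 1 = rcons tau0 b by [].
have TX : forall j, T (X j).
  suff : forall j, T (X j) /\ T (X j.+1) by move=> H j; case: (H j).
  elim=> [|j [H1 H2]]; first by [].
  split => //; rewrite X2; exact: (Tpk _ _ H1).1.
have PX : forall j, prefix (X j) (X j.+2) /\ (size (X j) < size (X j.+2))%N.
  move=> j; rewrite X2 /h; have [_ Hp] := Trho _ (TX j); split.
    exact: prefix_trans Hp (prefix_rcons _ _).
  by rewrite size_rcons ltnS size_prefix.
pose k := size tau0.
pose covered j n := exists l m, (l = j \/ l = j.+1) /\ (m <= n)%N /\ (m < size (X l))%N /\ (n <= nth 0%N (X l) m)%N.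
have Inv : forall j n, (k <= n)%N -> (n <= size (rho (X j)))%N -> covered j n.
  elim=> [|j IH] n kn nr.
    exists 1%N, k; split; first by right.
    rewrite X1 size_rcons nth_rcons ltnn eqxx; split => //; split => //.
    exact: leq_trans nr Hb.
  case: (leqP n (size (rho (X j)))) => nj.
    have [l [m [Hl [mn [ml nm]]]]] := IH n kn nj.
    case: Hl => El; subst l.
      exists j.+2, m; split; first by right.
      have [P1 P2] := PX j.
      split => //; split; first exact: leq_trans ml (ltnW P2).
      by rewrite -(nth_prefix ml P1).
    by exists j.+1, m; split; first by left.
  exists j.+2, (size (rho (X j))); split; first by right.
  rewrite X2 /h size_rcons nth_rcons ltnn eqxx; split; first exact: ltnW.
  split => //; apply: leq_trans nr _; exact: (Tpk _ _ (TX j)).2.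
pose Yf j := X j.*2.
pose Yg j := X j.*2.+1.
have Pf : forall j, prefix (Yf j) (Yf j.+1) by move=> j; rewrite /Yf doubleS; exact: (PX _).1.
have Pg : forall j, prefix (Yg j) (Yg j.+1) by move=> j; rewrite /Yg doubleS; exact: (PX _).1.
have Sf : forall j, (j < size (Yf j))%N.
  elim=> [|j IH]; first by rewrite /Yf /= X0 size_rcons.
  rewrite /Yf doubleS; exact: leq_ltn_trans IH (PX _).2.
have Sg : forall j, (j < size (Yg j))%N.
  elim=> [|j IH]; first by rewrite /Yg /= X1 size_rcons.
  rewrite /Yg doubleS; exact: leq_ltn_trans IH (PX _).2.
have Cf := @chain_limit Yf Pf Sf; destruct Cf as [Cf1 Cf2].
have Cg := @chain_limit Yg Pg Sg; destruct Cg as [Cg1 Cg2].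
exists (fun i => nth 0%N (Yf i) i), (fun i => nth 0%N (Yg i) i).
split; first by move=> n; apply: Tpre (Cf2 n) (TX _).
split; first by move=> n; apply: Tpre (Cg2 n) (TX _).
split.
  move=> E; have := congr1 (fun F => F k) E => /=.
  rewrite -(Cf1 0%N k) -?(Cg1 0%N k) /Yf /Yg /= ?X0 ?X1 ?nth_rcons ?size_rcons ?ltnn ?eqxx //.
move=> n kn.
have nr : (n <= size (rho (X n.*2)))%N.
  apply: (leq_trans (ltnW (Sf n))); exact: size_prefix (Trho _ (TX _)).2.
have [l [m [Hl [mn [ml nm]]]]] := Inv n.*2 n kn nr.
exists m; split => //.
case: Hl => El; subst l; [left; rewrite -(Cf1 n m ml) | right; rewrite -(Cg1 n m ml)] => //.
Qed.
Lemma inf_unbounded {A : set nat} : infinite_set A -> forall L, exists x, A x /\ (L <= x)%N.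
Proof.
move=> HA L; apply: contrapT => H; apply: HA.
apply: (sub_finite_set _ (finite_II L)) => x Ax /=.
rewrite ltnNge; apply/negP => Lx; apply: H; by exists x.
Qed.

Theorem proposition5p3 :
  exists M : set (baire * baire)%type,
    meager M /\
    forall T : set (seq nat), superperfect T ->
      exists f g : baire, body T f /\ body T g /\ f <> g /\ M (f, g).
Proof.
exists (fun x => exists k, Pk k x); split.
  exists Pk; split; first exact: Pk_nd.
  by move=> x [k Hk]; exists k.
move=> T [[T0 Tpre] Hsp].
have Hr : forall s, exists t, T s -> T t /\ prefix s t /\ infinite_set [set n | T (rcons t n)].
  move=> s; case: (pselect (T s)) => Ts; last by exists s.
  have [t Ht] := Hsp s Ts; by exists t.
have [rho Hrho] := choice Hr.
have Hp : forall p : seq nat * nat, exists x, T p.1 -> T (rcons (rho p.1) x) /\ (p.2 <= x)%N.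
  move=> [s L]; case: (pselect (T s)) => Ts; last by exists 0%N.
  have [_ [_ Hinf]] := Hrho s Ts.
  have [x [Tx Lx]] := inf_unbounded Hinf L; by exists x.
have [pk0 Hpk] := choice Hp.
have [tau0 [Tt0 [_ Hinf0]]] := Hsp [::] T0.
have [a [Ta _]] := inf_unbounded Hinf0 0.
have [b [Tb Lb]] := inf_unbounded Hinf0 (maxn (size (rho (rcons tau0 a))) a.+1).
have ab : a <> b by move=> E; move: Lb; rewrite -E geq_max ltnn andbF.
have Hb : (size (rho (rcons tau0 a)) <= b)%N by move: Lb; rewrite geq_max => /andP [].
have [f [g [Hf [Hg [fg Hfg]]]]] := @construct T rho (fun s L => pk0 (s, L)) tau0 a b
  Tpre (fun s Ts => let: conj x (conj y _) := Hrho s Ts in conj x y)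
  (fun s L Ts => Hpk (s, L) Ts) Ta Tb ab Hb.
exists f, g; split; first exact: Hf.
split; first exact: Hg.
split; first exact: fg.
by exists (size tau0).
Qed.
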